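(* Under the assumptions of the causal risk ratio identification result (binary $D,M(d),Y(d,m)$; $M=M(D)$, $Y=Y(D,M)$, $Y(d)=Y(d,M(d))$; $Y(d,0)=0$ a.s.; $D$ independent of $(M(d),Y(d,1))$ given $X=x$; $P(D=d\mid X=x)>0$, $P(M=1\mid D=d,X=x)>0$ for $d=0,1$; $\mathbb{E}[Y\mid D=0,M=1,X=x]>0$), suppose also stochastic mediator monotonicity $\mathbb{E}[M(1)\mid X=x]\ge\mathbb{E}[M(0)\mid X=x]$. Then the bias factor $$\left\{\frac{P(D=1\mid M=1,X=x)}{P(D=0\mid M=1,X=x)}\right\}\Big/\left\{\frac{P(D=1\mid X=x)}{P(D=0\mid X=x)}\right\}$$ is at least $1$, and hence $$\mathrm{CRR}(x)=\frac{\mathbb{E}[Y(1)\mid X=x]}{\mathbb{E}[Y(0)\mid X=x]}\ \ge\ \frac{\mathbb{E}[Y\mid D=1,M=1,X=x]}{\mathbb{E}[Y\mid D=0,M=1,X=x]}.$$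
   Context: $D$ is civilian race ($1$ = minority), $M$ detainment, $Y$ police use of force, $X$ covariates of a police–civilian encounter; $M(d)$ and $Y(d,m)$ are potential outcomes. Stochastic mediator monotonicity means that, on average given $X=x$, minorities are at least as likely to be detained as they would be were they of majority race. *)

(* Defs.v *)
From mathcomp Require Import all_boot all_order all_algebra.
Set Implicit Arguments. Unset Strict Implicit. Unset Printing Implicit Defensive.
Import Order.TTheory GRing.Theory Num.Theory.
Local Open Scope ring_scope.

Definition is_distr (R : realFieldType) (Omega : finType) (p : Omega -> R) :=
  (forall w, 0 <= p w) /\ \sum_w p w = 1.

Definition Pr (R : realFieldType) (Omega : finType) (p : Omega -> R)
  (A : Omega -> bool) : R := \sum_(w | A w) p w.

Definition cPr (R : realFieldType) (Omega : finType) (p : Omega -> R)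
  (A B : Omega -> bool) : R := Pr p (fun w => A w && B w) / Pr p B.

Definition cE (R : realFieldType) (Omega : finType) (p : Omega -> R)
  (f : Omega -> R) (B : Omega -> bool) : R :=
  (\sum_(w | B w) p w * f w) / Pr p B.

Definition rv (R : realFieldType) (Omega : finType) (Z : Omega -> bool)
  : Omega -> R := fun w => (Z w)%:R.

Definition Mobs (Omega : finType) (D : Omega -> bool)
  (Mpo : bool -> Omega -> bool) : Omega -> bool := fun w => Mpo (D w) w.
Definition Yobs (Omega : finType) (D : Omega -> bool)
  (Mpo : bool -> Omega -> bool) (Ypo : bool -> bool -> Omega -> bool)
  : Omega -> bool := fun w => Ypo (D w) (Mpo (D w) w) w.
Definition Ypo1 (Omega : finType) (Mpo : bool -> Omega -> bool)
  (Ypo : bool -> bool -> Omega -> bool) (d : bool) : Omega -> bool :=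
  fun w => Ypo d (Mpo d w) w.
Arguments rv {R Omega} Z _.

(* Main.v *)
Require Import Defs.
From mathcomp Require Import all_boot all_order all_algebra.
From mathcomp Require Import ring lra.
Import Order.TTheory GRing.Theory Num.Theory.
Local Open Scope ring_scope.

Section H.
Variables (R : realFieldType) (Omega : finType) (p : Omega -> R).
Hypothesis p0 : forall w, 0 <= p w.

Lemma Pr_ext (A B : Omega -> bool) : (forall w, A w = B w) -> Pr p A = Pr p B.
Proof. by move=> h; apply: eq_bigl. Qed.

Lemma Pr_ge0 A : 0 <= Pr p A.
Proof. by apply: sumr_ge0. Qed.

Lemma Pr_split A B : Pr p A = Pr p (fun w => A w && B w) + Pr p (fun w => A w && ~~ B w).
Proof. by rewrite /Pr (bigID B). Qed.

Lemma Pr_null (N A B : Omega -> bool) : Pr p N = 0 ->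
  (forall w, ~~ N w -> A w = B w) -> Pr p A = Pr p B.
Proof.
move=> hN h.
have z : forall C, Pr p (fun w => C w && N w) = 0.
  move=> C; apply/eqP; rewrite eq_le Pr_ge0 andbT -hN.
  rewrite [leRHS](Pr_split _ C); rewrite -[X in X <= _]addr0 lerD ?Pr_ge0 //.
  by rewrite le_eqVlt; apply/orP; left; apply/eqP; apply: Pr_ext => w; rewrite andbC.
rewrite (Pr_split A N) (Pr_split B N) !z !add0r; apply: Pr_ext => w.
case Nw: (N w); first by rewrite !andbF.
by rewrite h ?Nw.
Qed.

Lemma cE_rv (Z B : Omega -> bool) :
  cE p (rv Z) B = Pr p (fun w => Z w && B w) / Pr p B.
Proof.
rewrite /cE /Pr; congr (_ / _).
rewrite big_mkcond [RHS]big_mkcond; apply: eq_bigr => w _ /=.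
by rewrite /rv; case: (B w); case: (Z w) => /=; rewrite ?mulr1 ?mulr0 ?andbF.
Qed.
End H.
Arguments Pr_ge0 {R Omega p} p0 A.
Arguments Pr_null {R Omega p} p0 {N A B}.
Arguments Pr_ext {R Omega p A B}.
Arguments Pr_split {R Omega} p A B.
Arguments cE_rv {R Omega} p Z B.


Lemma pos_den (R : realFieldType) (a b : R) : 0 < a / b -> 0 <= b -> 0 < b.
Proof. rewrite le_eqVlt => h /orP [/eqP e|//]; by move: h; rewrite -e invr0 mulr0 ltxx. Qed.

Arguments pos_den {R a b}.

Ltac bc w D Mpo Ypo X x := move=> w;
  repeat match goal with v := _ : _ -> bool |- _ => subst v end;
  cbv beta; unfold Mobs, Yobs, Ypo1; rewrite ?eqb_id ?eqbF_neg;
  case: (D w); case: (Mpo true w); case: (Mpo false w); unfold andb, negb;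
  repeat match goal with |- context[match ?b with true => _ | false => _ end] =>
    lazymatch b with match _ with true => _ | false => _ end => fail | _ => case: b end end;
  reflexivity.

Theorem mainTheorem7 (R : realFieldType) (Omega : finType) (p : Omega -> R)
  (XT : eqType) (X : Omega -> XT) (x : XT)
  (D : Omega -> bool) (Mpo : bool -> Omega -> bool)
  (Ypo : bool -> bool -> Omega -> bool) :
  is_distr p ->
  let Xx := fun w => X w == x in
  let M := Mobs D Mpo in
  let Y := Yobs D Mpo Ypo in
  (* Y(d,0) = 0 almost surely *)
  (forall d, Pr p (fun w => Ypo d false w) = 0) ->
  (* D independent of (M(d), Y(d,1)) given X = x *)
  (forall d a b c,
     cPr p (fun w => (D w == a) && (Mpo d w == b) && (Ypo d true w == c)) Xx
     = cPr p (fun w => D w == a) Xx *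
       cPr p (fun w => (Mpo d w == b) && (Ypo d true w == c)) Xx) ->
  (* positivity *)
  (forall d, 0 < cPr p (fun w => D w == d) Xx) ->
  (forall d, 0 < cPr p M (fun w => (D w == d) && Xx w)) ->
  0 < cE p (rv Y) (fun w => ~~ D w && M w && Xx w) ->
  (* stochastic mediator monotonicity *)
  cE p (rv (Mpo true)) Xx >= cE p (rv (Mpo false)) Xx ->
  (cPr p D (fun w => M w && Xx w) / cPr p (fun w => ~~ D w) (fun w => M w && Xx w))
    / (cPr p D Xx / cPr p (fun w => ~~ D w) Xx) >= 1
  /\
  cE p (rv (Ypo1 Mpo Ypo true)) Xx / cE p (rv (Ypo1 Mpo Ypo false)) Xx
    >= cE p (rv Y) (fun w => D w && M w && Xx w)
       / cE p (rv Y) (fun w => ~~ D w && M w && Xx w).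
Proof.
move=> [p0 _] Xx M Y hY0 hInd hD hM hE hmon.
rewrite !cE_rv // in hE hmon *.
rewrite /cPr in hInd hD hM *.
set S := Pr p Xx.
set a1 := Pr p (fun w => D w && Xx w).
set a0 := Pr p (fun w => ~~ D w && Xx w).
set n1 := Pr p (fun w => Mpo true w && Xx w).
set n0 := Pr p (fun w => Mpo false w && Xx w).
set t1 := Pr p (fun w => D w && Mpo true w && Xx w).
set t0 := Pr p (fun w => ~~ D w && Mpo false w && Xx w).
set y1 := Pr p (fun w => Mpo true w && Ypo true true w && Xx w).
set y0 := Pr p (fun w => Mpo false w && Ypo false true w && Xx w).
set u1 := Pr p (fun w => D w && Mpo true w && Ypo true true w && Xx w).
set u0 := Pr p (fun w => ~~ D w && Mpo false w && Ypo false true w && Xx w).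
set v1 := Pr p (fun w => D w && Mpo true w && ~~ Ypo true true w && Xx w).
set v0 := Pr p (fun w => ~~ D w && Mpo false w && ~~ Ypo false true w && Xx w).
set z1 := Pr p (fun w => Mpo true w && ~~ Ypo true true w && Xx w).
set z0 := Pr p (fun w => Mpo false w && ~~ Ypo false true w && Xx w).
have hS : 0 < S.
  have h1 := hD true. have h2 := Pr_ge0 p0 Xx. exact: (pos_den h1 h2).
have SD : forall A, Pr p (fun w => A w && Xx w) = Pr p (fun w => A w && Xx w) by [].
have iu1 : u1 * S = a1 * y1.
  have := hInd true true true true.
  rewrite (Pr_ext (B := fun w => D w && Mpo true w && Ypo true true w && Xx w)); last by bc w D Mpo Ypo X x.
  rewrite (Pr_ext (A := fun w => (D w == true) && Xx w) (B := fun w => D w && Xx w)); last by bc w D Mpo Ypo X x.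
  rewrite (Pr_ext (A := fun w => (Mpo true w == true) && (Ypo true true w == true) && Xx w)
     (B := fun w => Mpo true w && Ypo true true w && Xx w)); last by bc w D Mpo Ypo X x.
  rewrite -/u1 -/a1 -/y1 -/S => e.
  have hS0 : S != 0 by rewrite gt_eqF.
  transitivity (u1 / S * S * S); first by field; rewrite ?hS0.
  rewrite e; field; by rewrite ?hS0.
have iu0 : u0 * S = a0 * y0.
  have := hInd false false true true.
  rewrite (Pr_ext (B := fun w => ~~ D w && Mpo false w && Ypo false true w && Xx w)); last by bc w D Mpo Ypo X x.
  rewrite (Pr_ext (A := fun w => (D w == false) && Xx w) (B := fun w => ~~ D w && Xx w)); last by bc w D Mpo Ypo X x.
  rewrite (Pr_ext (A := fun w => (Mpo false w == true) && (Ypo false true w == true) && Xx w)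
     (B := fun w => Mpo false w && Ypo false true w && Xx w)); last by bc w D Mpo Ypo X x.
  rewrite -/u0 -/a0 -/y0 -/S => e.
  have hS0 : S != 0 by rewrite gt_eqF.
  transitivity (u0 / S * S * S); first by field; rewrite ?hS0.
  rewrite e; field; by rewrite ?hS0.
have iv1 : v1 * S = a1 * z1.
  have := hInd true true true false.
  rewrite (Pr_ext (B := fun w => D w && Mpo true w && ~~ Ypo true true w && Xx w)); last by bc w D Mpo Ypo X x.
  rewrite (Pr_ext (A := fun w => (D w == true) && Xx w) (B := fun w => D w && Xx w)); last by bc w D Mpo Ypo X x.
  rewrite (Pr_ext (A := fun w => (Mpo true w == true) && (Ypo true true w == false) && Xx w)
     (B := fun w => Mpo true w && ~~ Ypo true true w && Xx w)); last by bc w D Mpo Ypo X x.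
  rewrite -/v1 -/a1 -/z1 -/S => e.
  have hS0 : S != 0 by rewrite gt_eqF.
  transitivity (v1 / S * S * S); first by field; rewrite ?hS0.
  rewrite e; field; by rewrite ?hS0.
have iv0 : v0 * S = a0 * z0.
  have := hInd false false true false.
  rewrite (Pr_ext (B := fun w => ~~ D w && Mpo false w && ~~ Ypo false true w && Xx w)); last by bc w D Mpo Ypo X x.
  rewrite (Pr_ext (A := fun w => (D w == false) && Xx w) (B := fun w => ~~ D w && Xx w)); last by bc w D Mpo Ypo X x.
  rewrite (Pr_ext (A := fun w => (Mpo false w == true) && (Ypo false true w == false) && Xx w)
     (B := fun w => Mpo false w && ~~ Ypo false true w && Xx w)); last by bc w D Mpo Ypo X x.
  rewrite -/v0 -/a0 -/z0 -/S => e.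
  have hS0 : S != 0 by rewrite gt_eqF.
  transitivity (v0 / S * S * S); first by field; rewrite ?hS0.
  rewrite e; field; by rewrite ?hS0.
have et1 : t1 = u1 + v1.
  rewrite /t1 /u1 /v1 (Pr_split p _ (Ypo true true)); congr (_ + _); apply: Pr_ext; by bc w D Mpo Ypo X x.
have et0 : t0 = u0 + v0.
  rewrite /t0 /u0 /v0 (Pr_split p _ (Ypo false true)); congr (_ + _); apply: Pr_ext; by bc w D Mpo Ypo X x.
have en1 : n1 = y1 + z1.
  rewrite /n1 /y1 /z1 (Pr_split p _ (Ypo true true)); congr (_ + _); apply: Pr_ext; by bc w D Mpo Ypo X x.
have en0 : n0 = y0 + z0.
  rewrite /n0 /y0 /z0 (Pr_split p _ (Ypo false true)); congr (_ + _); apply: Pr_ext; by bc w D Mpo Ypo X x.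
have it1 : t1 * S = a1 * n1 by rewrite et1 en1 mulrDl iu1 iv1 mulrDr.
have it0 : t0 * S = a0 * n0 by rewrite et0 en0 mulrDl iu0 iv0 mulrDr.
have ha1 : 0 < a1 / S.
  have := hD true; congr (0 < _ / _); apply: Pr_ext; by bc w D Mpo Ypo X x.
have ha0 : 0 < a0 / S.
  have := hD false; congr (0 < _ / _); apply: Pr_ext; by bc w D Mpo Ypo X x.
have ha1' : 0 < a1 by move: ha1; rewrite pmulr_lgt0 // invr_gt0.
have ha0' : 0 < a0 by move: ha0; rewrite pmulr_lgt0 // invr_gt0.
have ht1 : 0 < t1 / a1.
  have := hM true; rewrite /M; congr (0 < _ / _); apply: Pr_ext; by bc w D Mpo Ypo X x.
have ht0 : 0 < t0 / a0.
  have := hM false; rewrite /M; congr (0 < _ / _); apply: Pr_ext; by bc w D Mpo Ypo X x.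
have ht1' : 0 < t1 by move: ht1; rewrite pmulr_lgt0 // invr_gt0.
have ht0' : 0 < t0 by move: ht0; rewrite pmulr_lgt0 // invr_gt0.
have hu0 : 0 < u0 / t0.
  have := hE; rewrite /Y /M; congr (0 < _ / _); apply: Pr_ext; by bc w D Mpo Ypo X x.
have hu0' : 0 < u0 by move: hu0; rewrite pmulr_lgt0 // invr_gt0.
have hn0 : 0 < n0.
  have : 0 < t0 * S by rewrite mulr_gt0.
  by rewrite it0 pmulr_rgt0.
have hy0 : 0 < y0.
  have : 0 < u0 * S by rewrite mulr_gt0.
  by rewrite iu0 pmulr_rgt0.
have hmon' : n0 <= n1.
  by move: hmon; rewrite ler_pM2r // invr_gt0.
have hn1 : 0 < n1 by apply: lt_le_trans hmon'.
have hy1 : 0 <= y1 by apply: Pr_ge0.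
have hS0 : S != 0 by rewrite gt_eqF.
have ha10 : a1 != 0 by rewrite gt_eqF.
have ha00 : a0 != 0 by rewrite gt_eqF.
have hn10 : n1 != 0 by rewrite gt_eqF.
have hn00 : n0 != 0 by rewrite gt_eqF.
have hy00 : y0 != 0 by rewrite gt_eqF.
have et1' : t1 = a1 * n1 / S by rewrite -it1; field.
have et0' : t0 = a0 * n0 / S by rewrite -it0; field.
have eu1' : u1 = a1 * y1 / S by rewrite -iu1; field.
have eu0' : u0 = a0 * y0 / S by rewrite -iu0; field.
split.
- set K := Pr p (fun w => M w && Xx w).
  have eK : K = t1 + t0.
    rewrite /K (Pr_split p _ D); congr (_ + _); apply: Pr_ext; by bc w D Mpo Ypo X x.
  rewrite (Pr_ext (A := fun w => D w && (M w && Xx w)) (B := fun w => D w && Mpo true w && Xx w)); last by bc w D Mpo Ypo X x.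
  rewrite (Pr_ext (A := fun w => ~~ D w && (M w && Xx w)) (B := fun w => ~~ D w && Mpo false w && Xx w)); last by bc w D Mpo Ypo X x.
  rewrite -/t1 -/t0.
  have hK0 : K != 0 by rewrite eK gt_eqF // addr_gt0.
  have -> : t1 / K / (t0 / K) / (a1 / S / (a0 / S)) = n1 / n0.
    rewrite et1' et0'; field; rewrite ?hK0 ?hS0 ?ha10 ?ha00 ?hn00 //.
  by rewrite ler_pdivlMr // mul1r.
- have ey1 : Pr p (fun w => Ypo1 Mpo Ypo true w && Xx w) = y1.
    apply: (Pr_null p0 (N := Ypo true false)) => // w.
    rewrite /Ypo1; case: (Mpo true w) => //=; by case: (Ypo true false w).
  rewrite ey1.
  have ey0 : Pr p (fun w => Ypo1 Mpo Ypo false w && Xx w) = y0.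
    apply: (Pr_null p0 (N := Ypo false false)) => // w.
    rewrite /Ypo1; case: (Mpo false w) => //=; by case: (Ypo false false w).
  rewrite ey0.
  rewrite (Pr_ext (A := fun w => Y w && (D w && M w && Xx w)) (B := fun w => D w && Mpo true w && Ypo true true w && Xx w)); last by bc w D Mpo Ypo X x.
  rewrite (Pr_ext (A := fun w => D w && M w && Xx w) (B := fun w => D w && Mpo true w && Xx w)); last by bc w D Mpo Ypo X x.
  rewrite (Pr_ext (A := fun w => Y w && (~~ D w && M w && Xx w)) (B := fun w => ~~ D w && Mpo false w && Ypo false true w && Xx w)); last by bc w D Mpo Ypo X x.
  rewrite (Pr_ext (A := fun w => ~~ D w && M w && Xx w) (B := fun w => ~~ D w && Mpo false w && Xx w)); last by bc w D Mpo Ypo X x.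
  rewrite -/y1 -/y0 -/u1 -/u0 -/t1 -/t0 -/S.
  have -> : y1 / S / (y0 / S) = y1 / y0 by field; rewrite ?hS0 ?hy00.
  have -> : u1 / t1 / (u0 / t0) = y1 / y0 * (n0 / n1).
    rewrite eu1' eu0' et1' et0'; field; rewrite ?hS0 ?ha10 ?ha00 ?hn10 ?hn00 ?hy00 //.
  apply: ler_piMr; first by rewrite divr_ge0 // ltW.
  by rewrite ler_pdivrMr // mul1r.
Qed.
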